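(* Let $P$ and $Q$ be stochastic matrices over a countable set $\Omega$. Say that $P$ and $Q$ satisfy condition $(\star)$ via a permutation $\sigma$ of $\Omega$ if (a) for all $i,j$, $P_{ij}>0\iff Q_{\sigma(i)\sigma(j)}>0$, and (b) for all $n,m\in\mathbb{N}$ and all $i,j,k\in\Omega$ with $P^{(n)}_{ij}P^{(m)}_{jk}>0$, $$\frac{P^{(n)}_{ij}P^{(m)}_{jk}}{P^{(n+m)}_{ik}}=\frac{Q^{(n)}_{\sigma(i)\sigma(j)}Q^{(m)}_{\sigma(j)\sigma(k)}}{Q^{(n+m)}_{\sigma(i)\sigma(k)}}.$$ Then: (1) if there is a $\rho$-unitary isomorphism $Arv(P)\to Arv(Q)$ for a *-automorphism $\rho$ of $\ell^\infty(\Omega)$, then $P$ and $Q$ satisfy $(\star)$ via $\sigma_\rho$; (2) if $P$ and $Q$ satisfy $(\star)$ via $\sigma$, then there is a $\rho_\sigma$-unitary isomorphism $Arv(P)\to Arv(Q)$.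
   Context: A stochastic matrix over $\Omega$ has nonnegative entries and row sums $1$; $P^{(n)}_{ij}$ is the $(i,j)$ entry of $P^n$ ($P^0=I$). Every *-automorphism $\rho$ of $\ell^\infty(\Omega)$ is of the form $\rho_\sigma(f)=f\circ\sigma^{-1}$ for a unique permutation $\sigma$; $\sigma_\rho$ denotes the permutation with $\rho(p_j)=p_{\sigma_\rho(j)}$, $p_j$ the indicator of $\{j\}$. $Arv(P)$: $Arv(P)_0=\ell^\infty(\Omega)$; $Arv(P)_n$ ($n\ge1$) is the set of complex $\Omega\times\Omega$ matrices $A=[a_{ij}]$ with $a_{ij}=0$ whenever $P^{(n)}_{ij}=0$ and $\sup_j\sum_i|a_{ij}|^2<\infty$, a W*-correspondence over $\ell^\infty(\Omega)$ with actions by multiplication by diagonal matrices and inner product $\mathrm{Diag}(A^*B)$; $U^P_{n,m}(A\otimes B)=(\sqrt{P^{n+m}})^{\flat}*[(\sqrt{P^n}*A)(\sqrt{P^m}*B)]$ for $n,m\ge1$ ($*$ entrywise product, $\sqrt\cdot$ entrywise, $M^\flat_{ik}=M_{ik}^{-1}$ if $M_{ik}>0$, else $0$), $U_{0,n},U_{n,0}$ module actions. A $\rho$-unitary isomorphism $V:Arv(P)\to Arv(Q)$ is a family $(V_n)_{n\ge0}$ with $V_0=\rho$ and, for $n\ge1$, $V_n:Arv(P)_n\to Arv(Q)_n$ surjective linear with $V_n(a\xi b)=\rho(a)V_n(\xi)\rho(b)$ and $\rho^{-1}(\langle V_n\xi,V_n\eta\rangle)=\langle\xi,\eta\rangle$,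 such that $V_{n+m}U^P_{n,m}=U^Q_{n,m}(V_n\otimes V_m)$ for all $n,m$. *)

(* Defs.v *)
From Stdlib Require Import Reals.
From Coquelicot Require Import Coquelicot.
From mathcomp Require Import ssreflect ssrfun ssrbool eqtype choice.

Set Implicit Arguments.
Unset Strict Implicit.

Section Defs.
Variable T : countType.

Definition enumR (f : T -> R) (n : nat) : R :=
  match @pickle_inv T n with Some x => f x | None => 0%R end.

(* sum over the countable set T (used only for absolutely summable families) *)
Definition has_rsum (f : T -> R) (s : R) : Prop :=
  @is_series R_AbsRing R_NormedModule (enumR f) s.
Definition ex_rsum (f : T -> R) : Prop := exists s, has_rsum f s.
Definition rsum (f : T -> R) : R := Series (enumR f).
Definition csum (f : T -> C) : C :=
  (rsum (fun x => Re (f x)), rsum (fun x => Im (f x))).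

Definition rmat := T -> T -> R.
Definition cmat := T -> T -> C.

Fixpoint mpow (P : rmat) (n : nat) : rmat :=
  match n with
  | O => fun i k => if i == k then 1%R else 0%R
  | S n' => fun i k => rsum (fun j => (mpow P n' i j * P j k)%R)
  end.

Definition stochastic (P : rmat) : Prop :=
  (forall i j, (0 <= P i j)%R) /\ (forall i, has_rsum (P i) 1%R).

Definition linf (f : T -> C) : Prop := exists M, forall i, (Cmod (f i) <= M)%R.

Definition pind (j : T) : T -> C := fun i => if i == j then RtoC 1 else RtoC 0.

Definition star_aut (rho : (T -> C) -> (T -> C)) : Prop :=
  (forall f, linf f -> linf (rho f)) /\
  (forall f g, linf f -> linf g -> rho f = rho g -> f = g) /\
  (forall g, linf g -> exists f, linf f /\ rho f = g) /\
  (forall f g, linf f -> linf g -> rho (fun i => f i + g i)%C = (fun i => rho f i + rho g i)%C) /\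
  (forall c f, linf f -> rho (fun i => c * f i)%C = (fun i => c * rho f i)%C) /\
  (forall f g, linf f -> linf g -> rho (fun i => f i * g i)%C = (fun i => rho f i * rho g i)%C) /\
  (forall f, linf f -> rho (fun i => Cconj (f i)) = (fun i => Cconj (rho f i))).

(* Arv(P)_n for n >= 1 *)
Definition Arv (P : rmat) (n : nat) (A : cmat) : Prop :=
  (forall i j, mpow P n i j = 0%R -> A i j = RtoC 0) /\
  exists M, forall j, ex_rsum (fun i => (Cmod (A i j) ^ 2)%R) /\
                      (rsum (fun i => (Cmod (A i j) ^ 2)%R) <= M)%R.

(* bimodule actions: multiplication by diagonal matrices *)
Definition lact (a : T -> C) (A : cmat) : cmat := fun i j => (a i * A i j)%C.
Definition ract (A : cmat) (b : T -> C) : cmat := fun i j => (A i j * b j)%C.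
Definition cadd (A B : cmat) : cmat := fun i j => (A i j + B i j)%C.
Definition cscal (c : C) (A : cmat) : cmat := fun i j => (c * A i j)%C.

(* inner product Diag(A^* B) *)
Definition ip (A B : cmat) : T -> C := fun j => csum (fun i => (Cconj (A i j) * B i j)%C).

(* U^P_{n,m}(A (x) B) for n, m >= 1 *)
Definition flatinv (x : R) : R := if Rlt_dec 0 x then (/ x)%R else 0%R.
Definition Umul (P : rmat) (n m : nat) (A B : cmat) : cmat :=
  fun i k =>
    (RtoC (flatinv (sqrt (mpow P (n + m) i k))) *
     csum (fun j => (RtoC (sqrt (mpow P n i j)) * A i j) *
                    (RtoC (sqrt (mpow P m j k)) * B j k)))%C.

(* V = (V_n)_n is a rho-unitary isomorphism Arv(P) -> Arv(Q); V_0 = rho,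
   V n for n >= 1 acts on matrices (V 0 is unused) *)
Definition rho_unitary_iso (P Q : rmat) (rho : (T -> C) -> (T -> C))
    (V : nat -> cmat -> cmat) : Prop :=
  (forall n, (1 <= n)%nat ->
     (forall A, Arv P n A -> Arv Q n (V n A)) /\
     (forall B, Arv Q n B -> exists A, Arv P n A /\ V n A = B) /\
     (forall A B, Arv P n A -> Arv P n B -> V n (cadd A B) = cadd (V n A) (V n B)) /\
     (forall c A, Arv P n A -> V n (cscal c A) = cscal c (V n A)) /\
     (forall a b A, linf a -> linf b -> Arv P n A ->
        V n (ract (lact a A) b) = ract (lact (rho a) (V n A)) (rho b)) /\
     (forall A B, Arv P n A -> Arv P n B -> ip (V n A) (V n B) = rho (ip A B))) /\
  (forall n m A B, (1 <= n)%nat -> (1 <= m)%nat -> Arv P n A -> Arv P m B ->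
     V (n + m)%nat (Umul P n m A B) = Umul Q n m (V n A) (V m B)).

Definition star_cond (P Q : rmat) (sigma : T -> T) : Prop :=
  (forall i j, (0 < P i j)%R <-> (0 < Q (sigma i) (sigma j))%R) /\
  (forall (n m : nat) (i j k : T),
     (0 < mpow P n i j * mpow P m j k)%R ->
     (mpow P n i j * mpow P m j k / mpow P (n + m) i k)%R =
     (mpow Q n (sigma i) (sigma j) * mpow Q m (sigma j) (sigma k)
        / mpow Q (n + m) (sigma i) (sigma k))%R).

End Defs.

(* Main.v *)
Require Import Defs.
From HB Require Import structures.
From Stdlib Require Import Reals Lra Lia Classical FunctionalExtensionality.
From Coquelicot Require Import Coquelicot.
From mathcomp Require Import ssreflect ssrfun ssrbool eqtype choice ssrnat seq bigop.

HB.instance Definition _ := Monoid.isComLaw.Build R 0%R Rplus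
  (fun a b c => esym (Rplus_assoc a b c)) Rplus_comm Rplus_0_l.
Open Scope R_scope.

Lemma ser_of_lim (a : nat -> R) (l:R) : is_lim_seq (sum_n a) l -> is_series a l.
Proof. intros H. exact H. Qed.
Lemma lim_of_ser (a : nat -> R) (l:R) : is_series a l -> is_lim_seq (sum_n a) l.
Proof. intros H. exact H. Qed.

Lemma Series_zero : Series (fun _ => 0) = 0.
Proof.
apply: is_series_unique; apply: ser_of_lim.
apply: (is_lim_seq_ext (fun _ => 0)) (is_lim_seq_const 0) => n.
rewrite sum_n_const; ring.
Qed.

Lemma sum_n_iota (a : nat -> R) N : sum_n a N = \big[Rplus/0]_(n <- iota 0 N.+1) a n.
Proof.
elim: N => [|N IH]; first by rewrite sum_O big_cons big_nil Rplus_0_r.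
have -> : iota 0 N.+2 = iota 0 N.+1 ++ [:: N.+1] by rewrite -addn1 iotaD.
by rewrite sum_Sn IH big_cat big_seq1.
Qed.

Lemma lsum_ge0 (I : Type) (s : seq I) (f : I -> R) :
  (forall x, 0 <= f x) -> 0 <= \big[Rplus/0]_(x <- s) f x.
Proof.
move=> H; elim: s => [|x s IH]; first by rewrite big_nil; lra.
rewrite big_cons; have := H x; lra.
Qed.

Lemma sum_n_ge0 (a : nat -> R) N : (forall n, 0 <= a n) -> 0 <= sum_n a N.
Proof. move=> H; rewrite sum_n_iota; exact: lsum_ge0. Qed.

Lemma ser_part_le (a : nat -> R) N :
  (forall n, 0 <= a n) -> ex_series a -> sum_n a N <= Series a.
Proof.
move=> H He. apply: (is_lim_seq_incr_compare (sum_n a) (Series a)).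
  exact: lim_of_ser (Series_correct _ He).
move=> n; rewrite sum_Sn /plus /=; have := H n.+1; lra.
Qed.

Lemma ser_bounded (a : nat -> R) M :
  (forall n, 0 <= a n) -> (forall N, sum_n a N <= M) -> ex_series a /\ Series a <= M.
Proof.
move=> H HM.
have [l Hl] : ex_finite_lim_seq (sum_n a).
  apply: (ex_finite_lim_seq_incr _ M) => // n. rewrite sum_Sn /plus /=; have := H n.+1; lra.
have Hs : is_series a l by exact: ser_of_lim.
split; first by exists l.
rewrite (is_series_unique _ _ Hs).
have := is_lim_seq_le _ _ _ _ HM Hl (is_lim_seq_const M). done.
Qed.

Lemma ser_ge0 (a : nat -> R) : (forall n, 0 <= a n) -> 0 <= Series a.
Proof.
move=> H. rewrite /Series.
have Hle : Rbar_le (Lim_seq (fun _ => 0)) (Lim_seq (sum_n a)).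
  apply: Lim_seq_le_loc. exists 0%N => n _. exact: sum_n_ge0.
rewrite Lim_seq_const in Hle. case: (Lim_seq (sum_n a)) Hle => [x H0|_|[]]; [exact H0|apply Rle_refl].
Qed.

Lemma sum_n_last_le (a : nat -> R) N : (forall n, 0 <= a n) -> a N <= sum_n a N.
Proof.
move=> H; case: N => [|N]; first by rewrite sum_O; lra.
rewrite sum_Sn /plus /=. have := sum_n_ge0 a N H; lra.
Qed.

Section Count.
Variable T : countType.
Implicit Types f g : T -> R.

Definition sN N := pmap (@pickle_inv T) (iota 0 N.+1).
Notation lsum f s := (\big[Rplus/0]_(x <- s) f x).

Lemma sum_enumR f N : sum_n (enumR f) N = lsum f (sN N).
Proof.
rewrite sum_n_iota /sN; elim: (iota 0 N.+1) => [|n l IH]; first by rewrite !big_nil.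
rewrite big_cons IH /enumR /=; case: (pickle_inv n) => [x|] /=; first by rewrite big_cons.
by rewrite Rplus_0_l.
Qed.

Lemma sN_uniq N : uniq (sN N).
Proof. exact: (pmap_uniq (@pickle_invK T) (iota_uniq 0 N.+1)). Qed.

Lemma mem_sN x N : (x \in sN N) = (pickle x <= N)%N.
Proof.
rewrite /sN mem_pmap; apply/mapP/idP.
  move=> [n Hn Hx]. have := @pickle_invK T n; rewrite -Hx /= => ->.
  by move: Hn; rewrite mem_iota.
move=> H; exists (pickle x); last by rewrite pickleK_inv.
by rewrite mem_iota.
Qed.

Lemma bound_list (t : seq T) : exists K, forall y, y \in t -> (pickle y <= K)%N.
Proof.
elim: t => [|y t [K HK]]; first by exists 0%N.
exists (maxn (pickle y) K) => z; rewrite inE => /orP [/eqP ->|/HK h].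
  exact: leq_maxl.
exact: leq_trans h (leq_maxr _ _).
Qed.

Lemma lsum_sub (s t : seq T) f : (forall x, 0 <= f x) -> uniq s -> uniq t ->
  {subset s <= t} -> lsum f s <= lsum f t.
Proof.
move=> H Us Ut Sst.
rewrite -(perm_big _ (permEl (perm_filterC (mem s) t))) big_cat.
have Hp : perm_eq [seq x <- t | mem s x] s.
  apply: uniq_perm => //; first exact: filter_uniq.
  move=> x; rewrite mem_filter; apply/idP/idP => [/andP[]//|h]; apply/andP; split => //; exact: Sst.
rewrite /= (perm_big _ Hp). have := @lsum_ge0 T [seq x <- t | predC (mem s) x] f H. move=> h; rewrite -[X in X <= _]Rplus_0_r; apply: Rplus_le_compat => //; exact: Rle_refl.
Qed.

Lemma enumR_ge0 f n : (forall x, 0 <= f x) -> 0 <= enumR f n.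
Proof. move=> H; rewrite /enumR; case: (pickle_inv n) => [x|] //; lra. Qed.

Lemma enumR_pickle f x : enumR f (pickle x) = f x.
Proof. by rewrite /enumR pickleK_inv. Qed.

Lemma rsum_ge0 f : (forall x, 0 <= f x) -> 0 <= rsum f.
Proof. move=> H; apply: ser_ge0 => n; exact: enumR_ge0. Qed.

Lemma part_le_rsum f N : (forall x, 0 <= f x) -> ex_rsum f -> lsum f (sN N) <= rsum f.
Proof.
move=> H He; rewrite -sum_enumR; apply: ser_part_le => // n; exact: enumR_ge0.
Qed.

Lemma term_le_rsum f x : (forall x, 0 <= f x) -> ex_rsum f -> f x <= rsum f.
Proof.
move=> H He. rewrite -(enumR_pickle f x).
apply: Rle_trans (sum_n_last_le _ _ (fun n => enumR_ge0 f n H)) _.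
apply: ser_part_le => // n; exact: enumR_ge0.
Qed.

Lemma rsum_bounded f M : (forall x, 0 <= f x) -> (forall N, lsum f (sN N) <= M) ->
  ex_rsum f /\ rsum f <= M.
Proof.
move=> H HM; apply: ser_bounded; first by move=> n; exact: enumR_ge0.
by move=> N; rewrite sum_enumR.
Qed.

Lemma single_rsum f x0 : (forall x, x <> x0 -> f x = 0) -> has_rsum f (f x0).
Proof.
move=> Hx; apply: ser_of_lim.
apply: (is_lim_seq_ext_loc (fun _ => f x0)); last exact: is_lim_seq_const.
exists (pickle x0) => N /leP HN.
rewrite sum_enumR (bigD1_seq x0) ?sN_uniq ?mem_sN //.
rewrite big1 => [|i /eqP Hi]; [by rewrite /= Rplus_0_r| exact: Hx Hi].
Qed.

Lemma single_rsum_eq f x0 : (forall x, x <> x0 -> f x = 0) -> ex_rsum f /\ rsum f = f x0.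
Proof.
move=> Hx; have H := @single_rsum f x0 Hx; split; first by exists (f x0).
exact: is_series_unique H.
Qed.


Lemma ex_rsum_le f h : (forall x, Rabs (f x) <= h x) -> ex_rsum h -> ex_rsum f.
Proof.
move=> H He; apply: (ex_series_le (enumR f) (enumR h)) => // n.
rewrite /enumR; case: (pickle_inv n) => [x|]; last by rewrite norm_zero; exact: Rle_refl.
exact: H.
Qed.

Lemma ex_rsum_scal f c : ex_rsum f -> ex_rsum (fun x => f x * c).
Proof.
move=> He; apply: (ex_series_ext (fun n => enumR f n * c)); last exact: ex_series_scal_r.
  move=> n; rewrite /enumR; case: (pickle_inv n) => [x|]; first reflexivity.
  by rewrite Rmult_0_l.
Qed.

Lemma ex_rsum_plus f g : ex_rsum f -> ex_rsum g -> ex_rsum (fun x => f x + g x).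
Proof.
move=> Hf Hg; apply: (ex_series_ext (fun n => plus (enumR f n) (enumR g n))).
  move=> n; rewrite /enumR /plus /=; case: (pickle_inv n) => //=; ring.
exact: ex_series_plus.
Qed.

Lemma rsum_split {g h1 h2} : (forall x, g x = h1 x - h2 x) -> ex_rsum h1 -> ex_rsum h2 ->
  rsum g = rsum h1 - rsum h2.
Proof.
move=> H E1 E2; rewrite /rsum -Series_minus //; apply: Series_ext => n.
rewrite /enumR; case: (pickle_inv n) => //; ring.
Qed.

Lemma rsum_ext f g : (forall x, f x = g x) -> rsum f = rsum g.
Proof. move=> H; rewrite /rsum; apply: Series_ext => n; rewrite /enumR; case: (pickle_inv n) => //. Qed.

Lemma reindex_le {tau taui : T -> T} {g} : cancel tau taui -> (forall x, 0 <= g x) ->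
  ex_rsum g -> ex_rsum (g \o tau) /\ rsum (g \o tau) <= rsum g.
Proof.
move=> Hc H He; apply: rsum_bounded => [x|N]; first exact: H.
have -> : lsum (g \o tau) (sN N) = lsum g (map tau (sN N)) by rewrite big_map.
have [K HK] := bound_list (map tau (sN N)).
apply: (Rle_trans _ _ _ _ (part_le_rsum g K H He)).
apply: lsum_sub => //; first by rewrite (map_inj_uniq (can_inj Hc)) sN_uniq.
  exact: sN_uniq.
by move=> y Hy; rewrite mem_sN; exact: HK.
Qed.

Lemma reindex_nonneg {tau taui : T -> T} {g} : cancel tau taui -> cancel taui tau ->
  (forall x, 0 <= g x) -> ex_rsum g -> has_rsum (g \o tau) (rsum g).
Proof.
move=> Hc Hc' H He.
have [E1 L1] := reindex_le Hc H He.
have H' : forall x, 0 <= (g \o tau) x by move=> x; exact: H.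
have [_ L2] := reindex_le Hc' H' E1.
have Eq : (g \o tau) \o taui = g by apply: functional_extensionality => x; rewrite /= Hc'.
rewrite Eq in L2.
have -> : rsum g = rsum (g \o tau) by lra.
exact: Series_correct E1.
Qed.

Lemma reindex_abs {tau taui : T -> T} {g} : cancel tau taui -> cancel taui tau ->
  ex_rsum (fun x => Rabs (g x)) -> rsum (g \o tau) = rsum g.
Proof.
move=> Hc Hc' He.
set h1 := fun x => Rabs (g x) + g x.
set h2 := fun x => Rabs (g x).
have P1 : forall x, 0 <= h1 x.
  move=> x; rewrite /h1; have := Rabs_pos (g x); have := Rle_abs (- g x); rewrite Rabs_Ropp; lra.
have P2 : forall x, 0 <= h2 x by move=> x; exact: Rabs_pos.
have E1 : ex_rsum h1.
  apply: (ex_rsum_le _ (fun x => Rabs (g x) * 2)); last exact: ex_rsum_scal.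
  move=> x; rewrite /h1 Rabs_pos_eq; last exact: P1.
  have := Rle_abs (g x); lra.
have S1 := reindex_nonneg Hc Hc' P1 E1.
have S2 := reindex_nonneg Hc Hc' P2 He.
rewrite (rsum_split (h1:=h1 \o tau) (h2:=h2 \o tau)).
- have -> : rsum (h1 \o tau) = rsum h1 := is_series_unique _ _ S1.
  have -> : rsum (h2 \o tau) = rsum h2 := is_series_unique _ _ S2.
  symmetry; apply: rsum_split => // x; rewrite /h1 /h2; ring.
- by move=> x; rewrite /h1 /h2 /=; ring.
- by exists (rsum h1).
- by exists (rsum h2).
Qed.

Lemma im_le_Cmod (c : C) : Rabs (Im c) <= Cmod c.
Proof.
have H1 := Cmod2_alt c. have H2 := Cmod_ge_0 c. have H3 := pow2_abs (Im c).
have H4 := Rabs_pos (Im c).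
apply: Rnot_lt_le => Hlt.
have : Cmod c ^ 2 < Rabs (Im c) ^ 2 by nra.
have := pow2_ge_0 (Re c). lra.
Qed.

Lemma csum_reindex {tau taui : T -> T} {F : T -> C} : cancel tau taui -> cancel taui tau ->
  ex_rsum (fun x => Cmod (F x)) -> csum (F \o tau) = csum F.
Proof.
move=> Hc Hc' He; rewrite /csum; congr pair.
  have := @reindex_abs tau taui (fun x => Re (F x)) Hc Hc'; apply.
  apply: (ex_rsum_le _ (fun x => Cmod (F x))) => // x /=.
  rewrite Rabs_Rabsolu; apply: re_le_Cmod.
have := @reindex_abs tau taui (fun x => Im (F x)) Hc Hc'; apply.
apply: (ex_rsum_le _ (fun x => Cmod (F x))) => // x /=.
rewrite Rabs_Rabsolu; apply: im_le_Cmod.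
Qed.


Lemma rsum_zero f : (forall x, f x = 0) -> rsum f = 0.
Proof.
move=> H; rewrite /rsum -Series_zero; apply: Series_ext => n.
by rewrite /enumR; case: (pickle_inv n) => // x; rewrite H.
Qed.

Lemma rsum_le f g : (forall x, 0 <= f x <= g x) -> ex_rsum g -> rsum f <= rsum g.
Proof.
move=> H He; apply: Series_le => // n; rewrite /enumR; case: (pickle_inv n) => [x|]; [exact: H | split; exact: Rle_refl].
Qed.

Lemma rsum_plus f g : ex_rsum f -> ex_rsum g -> rsum (fun x => f x + g x) = rsum f + rsum g.
Proof.
move=> Hf Hg; rewrite /rsum -Series_plus //; apply: Series_ext => n.
rewrite /enumR; case: (pickle_inv n) => //; lra.
Qed.

Lemma lsum_rsum (s : seq T) (F : T -> T -> R) : (forall k, ex_rsum (fun j => F j k)) ->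
  ex_rsum (fun j => lsum (fun k => F j k) s) /\
  lsum (fun k => rsum (fun j => F j k)) s = rsum (fun j => lsum (fun k => F j k) s).
Proof.
move=> H; elim: s => [|k s [IH1 IH2]].
  have E : ex_rsum (fun _ : T => 0).
    exists 0; apply: ser_of_lim; apply: (is_lim_seq_ext (fun _ => 0)) (is_lim_seq_const 0) => n.
    rewrite sum_n_iota big1 // => m _; rewrite /enumR; by case: (pickle_inv m).
  split.
    apply: (ex_series_ext (enumR (fun _ : T => 0))) E => n.
    by rewrite /enumR; case: (pickle_inv n) => // x; rewrite big_nil.
  by rewrite big_nil; symmetry; apply: rsum_zero => x; rewrite big_nil.
split.
  apply: (ex_series_ext (enumR (fun j => F j k + lsum (fun k => F j k) s))).
    by move=> n; rewrite /enumR; case: (pickle_inv n) => // x; rewrite big_cons.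
  exact: ex_rsum_plus.
rewrite big_cons IH2 -rsum_plus //; apply: rsum_ext => x; by rewrite big_cons.
Qed.

End Count.
Arguments sum_enumR {T}.
Arguments sN_uniq {T}.
Arguments mem_sN {T}.
Arguments bound_list {T}.
Arguments lsum_sub {T}.
Arguments enumR_ge0 {T}.
Arguments enumR_pickle {T}.
Arguments rsum_ge0 {T}.
Arguments part_le_rsum {T}.
Arguments term_le_rsum {T}.
Arguments rsum_bounded {T}.
Arguments single_rsum {T}.
Arguments single_rsum_eq {T}.
Arguments ex_rsum_le {T}.
Arguments ex_rsum_scal {T}.
Arguments ex_rsum_plus {T}.
Arguments rsum_split {T}.
Arguments rsum_ext {T}.
Arguments reindex_le {T}.
Arguments reindex_nonneg {T}.
Arguments reindex_abs {T}.
Arguments csum_reindex {T}.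
Arguments rsum_zero {T}.
Arguments rsum_le {T}.
Arguments rsum_plus {T}.
Arguments lsum_rsum {T}.
Arguments sN {T}.

Section Mpow.
Variable T : countType.
Variable P : rmat T.
Hypothesis HP : stochastic P.
Notation lsum f s := (\big[Rplus/0]_(x <- s) f x).

Lemma mpow_ge0 n i j : 0 <= mpow P n i j.
Proof.
elim: n i j => [|n IH] i j /=; first by case: (i == j); lra.
apply: rsum_ge0 => x; apply: Rmult_le_pos; [exact: IH | exact: HP.1].
Qed.

Lemma P_row j : ex_rsum (P j) /\ rsum (P j) = 1.
Proof. have H := HP.2 j; split; [by exists 1 | exact: is_series_unique H]. Qed.

Lemma P_le1 j k : P j k <= 1.
Proof.
have [E S] := P_row j; rewrite -S; apply: term_le_rsum => // x; exact: HP.1.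
Qed.

Lemma mpow_row n i : ex_rsum (mpow P n i) /\ rsum (mpow P n i) <= 1.
Proof.
elim: n i => [|n IH] i.
  have Hz : forall x, x <> i -> mpow P 0 i x = 0.
    move=> x Hx /=; case: (i =P x) => [E|//]; by case: Hx; rewrite E.
  have [E S] := @single_rsum_eq T (mpow P 0 i) i Hz.
  by split => //; rewrite S /= eqxx; lra.
have [Ea Sa] := IH i.
have Hk : forall k, ex_rsum (fun j => mpow P n i j * P j k).
  move=> k; apply: (ex_rsum_le _ (mpow P n i)) => // j.
  rewrite Rabs_pos_eq; last exact: Rmult_le_pos (mpow_ge0 _ _ _) (HP.1 _ _).
  have := P_le1 j k; have := mpow_ge0 n i j; have := HP.1 j k; nra.
apply: rsum_bounded => [x|N]; first exact: mpow_ge0.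
have [_ E] := lsum_rsum (sN N) (fun j k => mpow P n i j * P j k) Hk.
rewrite /= E; apply: Rle_trans Sa; apply: rsum_le => // j; split.
  apply: lsum_ge0 => k; apply: Rmult_le_pos; [exact: mpow_ge0|exact: HP.1].
have -> : lsum (fun k => mpow P n i j * P j k) (sN N) = mpow P n i j * lsum (P j) (sN N).
  elim: (sN N) => [|x s IHs]; first by rewrite !big_nil; ring.
  by rewrite !big_cons IHs; ring.
have : lsum (P j) (sN N) <= 1.
  have [E1 S1] := P_row j; rewrite -S1; apply: part_le_rsum => // x; exact: HP.1.
have := mpow_ge0 n i j; have := @lsum_ge0 T (sN N) (P j) (HP.1 j). nra.
Qed.

Lemma mpow_le1 n i j : mpow P n i j <= 1.
Proof.
have [E S] := mpow_row n i; apply: Rle_trans S; apply: term_le_rsum => // x; exact: mpow_ge0.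
Qed.

Lemma mpow_S_ex n i k : ex_rsum (fun j => mpow P n i j * P j k).
Proof.
have [Ea Sa] := mpow_row n i.
apply: (ex_rsum_le _ (mpow P n i)) => // j.
rewrite Rabs_pos_eq; last exact: Rmult_le_pos (mpow_ge0 _ _ _) (HP.1 _ _).
have := P_le1 j k; have := mpow_ge0 n i j; have := HP.1 j k; nra.
Qed.

Lemma mpow_S_pos n i j k : 0 < mpow P n i j -> 0 < P j k -> 0 < mpow P n.+1 i k.
Proof.
move=> H1 H2 /=.
have : mpow P n i j * P j k <= rsum (fun j => mpow P n i j * P j k).
  apply: (term_le_rsum (fun j => mpow P n i j * P j k)); last exact: mpow_S_ex.
  move=> x; apply: Rmult_le_pos; [exact: mpow_ge0|exact: HP.1].
have := Rmult_lt_0_compat _ _ H1 H2; lra.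
Qed.

Lemma mpow_S_inv n i k : 0 < mpow P n.+1 i k -> exists j, 0 < mpow P n i j /\ 0 < P j k.
Proof.
move=> H; apply: NNPP => Hn; move: H => /=.
rewrite rsum_zero; first lra.
move=> j; have h1 := mpow_ge0 n i j; have h2 := HP.1 j k.
case: (Rle_lt_or_eq_dec _ _ h1) => [a|<-]; last ring.
case: (Rle_lt_or_eq_dec _ _ h2) => [b|<-]; last ring.
by case: Hn; exists j.
Qed.

Lemma mpow_1 i k : mpow P 1 i k = P i k.
Proof.
rewrite /=.
have Hz : forall x, x <> i -> (fun j => (if i == j then 1 else 0) * P j k) x = 0.
  move=> x Hx /=; case: (i =P x) => [E|_]; [by case: Hx; rewrite E | ring].
have [_ S] := @single_rsum_eq T (fun j => (if i == j then 1 else 0) * P j k) i Hz.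
by rewrite S eqxx Rmult_1_l.
Qed.


Lemma Arv_bound n A : Arv P n A -> exists M, forall i j, Cmod (A i j) ^ 2 <= M.
Proof.
case=> _ [M HM]; exists M => i j; have [E S] := HM j; apply: Rle_trans S.
apply: (term_le_rsum (fun i => Cmod (A i j) ^ 2)) => // x; exact: pow2_ge_0.
Qed.

Lemma Arv_col n A j : Arv P n A -> ex_rsum (fun i => Cmod (A i j) ^ 2).
Proof. by case=> _ [M HM]; case: (HM j). Qed.

Lemma ip_ex n A B j : Arv P n A -> Arv P n B ->
  ex_rsum (fun i => Cmod (Cconj (A i j) * B i j)%C).
Proof.
move=> HA HB.
apply: (ex_rsum_le _ (fun i => Cmod (A i j) ^ 2 + Cmod (B i j) ^ 2)).
  move=> i; rewrite Cmod_mult Cmod_conj Rabs_pos_eq; last by apply: Rmult_le_pos; apply: Cmod_ge_0.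
  have := Cmod_ge_0 (A i j); have := Cmod_ge_0 (B i j); nra.
exact: (ex_rsum_plus (fun i => Cmod (A i j) ^ 2) (fun i => Cmod (B i j) ^ 2) (Arv_col _ _ j HA) (Arv_col _ _ j HB)).
Qed.

Lemma umul_ex n m A B i k : Arv P n A -> Arv P m B ->
  ex_rsum (fun j => Cmod ((RtoC (sqrt (mpow P n i j)) * A i j) *
                          (RtoC (sqrt (mpow P m j k)) * B j k))%C).
Proof.
move=> HA HB; have [MA HMA] := Arv_bound _ _ HA.
apply: (ex_rsum_le _ (fun j => mpow P n i j * MA + Cmod (B j k) ^ 2)).
  move=> j; rewrite Rabs_pos_eq; last exact: Cmod_ge_0.
  rewrite !Cmod_mult !Cmod_R.
  rewrite !(Rabs_pos_eq (sqrt _)); try exact: sqrt_pos.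
  set s1 := sqrt (mpow P n i j); set s2 := sqrt (mpow P m j k).
  set a := Cmod (A i j); set b := Cmod (B j k).
  have h1 : s1 * s1 = mpow P n i j by rewrite /s1 sqrt_sqrt //; exact: mpow_ge0.
  have h2 : s2 <= 1.
    rewrite /s2 -sqrt_1; apply: sqrt_le_1_alt; exact: mpow_le1.
  have h3 : 0 <= s1 by exact: sqrt_pos.
  have h4 : 0 <= s2 by exact: sqrt_pos.
  have h5 : 0 <= a by exact: Cmod_ge_0.
  have h6 : 0 <= b by exact: Cmod_ge_0.
  have h7 := HMA i j; rewrite -/a in h7.
  have h8 : mpow P n i j * (a ^ 2) <= mpow P n i j * MA.
    apply: Rmult_le_compat_l => //; exact: mpow_ge0.
  have h9 : s1 * a * (s2 * b) <= s1 * a * b.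
    apply: Rmult_le_compat_l; first nra. nra.
  have h10 : s1 * a * b <= (s1 * a) ^ 2 + b ^ 2 by nra.
  have h11 : (s1 * a) ^ 2 = mpow P n i j * a ^ 2 by rewrite -h1; ring.
  lra.
apply: ex_rsum_plus; last exact: Arv_col _ _ k HB.
exact: ex_rsum_scal (mpow_row n i).1.
Qed.

End Mpow.
Arguments mpow_ge0 {T P}.
Arguments P_row {T P}.
Arguments P_le1 {T P}.
Arguments mpow_row {T P}.
Arguments mpow_le1 {T P}.
Arguments mpow_S_ex {T P}.
Arguments mpow_S_pos {T P}.
Arguments mpow_S_inv {T P}.
Arguments mpow_1 {T P}.
Arguments Arv_bound {T P}.
Arguments Arv_col {T P}.
Arguments ip_ex {T P}.
Arguments umul_ex {T P}.

Lemma flatinv_sqrt p1 p2 x : 0 <= p1 -> 0 <= p2 -> 0 <= x ->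
  flatinv (sqrt x) * sqrt p1 * sqrt p2 = sqrt (p1 * p2 / x).
Proof.
move=> h1 h2 hx; rewrite /flatinv; case: (Rlt_dec 0 (sqrt x)) => H /=.
  have hx' : 0 < x.
    case: (Rle_lt_or_eq_dec _ _ hx) => // E; rewrite -E sqrt_0 in H; lra.
  rewrite sqrt_div_alt // sqrt_mult_alt //. field; lra.
have E : x = 0.
  case: (Rle_lt_or_eq_dec _ _ hx) => // hx'; case: H; exact: sqrt_lt_R0.
by rewrite E /Rdiv Rinv_0 Rmult_0_r sqrt_0; ring.
Qed.

Lemma rsum_scal (T : countType) (f : T -> R) r : rsum (fun x => r * f x) = r * rsum f.
Proof.
rewrite /rsum -Series_scal_l; apply: Series_ext => n.
rewrite /enumR; case: (pickle_inv n) => //; ring.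
Qed.

Lemma csum_scal (T : countType) (r : R) (F : T -> C) :
  csum (fun x => (RtoC r * F x)%C) = (RtoC r * csum F)%C.
Proof.
rewrite /csum.
have -> : rsum (fun x => Re (RtoC r * F x)%C) = r * rsum (fun x => Re (F x)).
  by rewrite -rsum_scal; apply: rsum_ext => x; rewrite re_scal_l.
have -> : rsum (fun x => Im (RtoC r * F x)%C) = r * rsum (fun x => Im (F x)).
  by rewrite -rsum_scal; apply: rsum_ext => x; rewrite im_scal_l.
rewrite /Cmult /RtoC /=; f_equal; ring.
Qed.

Lemma csum_single (T : countType) (F : T -> C) x0 : (forall x, x <> x0 -> F x = 0) ->
  csum F = F x0.
Proof.
move=> H; rewrite /csum.
have [_ ->] := single_rsum_eq (fun x => Re (F x)) x0 (fun x hx => f_equal Re (H x hx)).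
have [_ ->] := single_rsum_eq (fun x => Im (F x)) x0 (fun x hx => f_equal Im (H x hx)).
by case: (F x0).
Qed.

Section Part2.
Variable T : countType.
Variables P Q : rmat T.
Hypothesis HP : stochastic P.
Hypothesis HQ : stochastic Q.
Variables sigma sigmainv : T -> T.
Hypothesis Hc : cancel sigma sigmainv.
Hypothesis Hc' : cancel sigmainv sigma.
Hypothesis Hs : star_cond P Q sigma.

Lemma Z1 n a b : 0 < mpow P n a b -> 0 < mpow Q n (sigma a) (sigma b).
Proof.
move=> H; have [_ Hb] := Hs.
have Hp : 0 < mpow P n a b * mpow P 0 b b by rewrite /= eqxx Rmult_1_r.
have E := Hb n 0%N a b b Hp.
rewrite /= !eqxx !Rmult_1_r !Nat.add_0_r in E.
rewrite /Rdiv Rinv_r in E; last lra.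
apply: Rnot_le_lt => Hle.
have E0 : mpow Q n (sigma a) (sigma b) = 0 by have := mpow_ge0 HQ n (sigma a) (sigma b); lra.
rewrite E0 Rinv_0 Rmult_0_r in E; lra.
Qed.

Lemma Z2 n a b : 0 < mpow Q n (sigma a) (sigma b) -> 0 < mpow P n a b.
Proof.
elim: n b => [|n IH] b.
  rewrite /=; case: (sigma a =P sigma b) => [E|_] H; last lra.
  by rewrite (can_inj Hc E) eqxx; lra.
move=> H; have [y [H1 H2]] := @mpow_S_inv _ Q HQ n _ _ H.
rewrite -(Hc' y) in H1 H2.
have H3 := IH _ H1.
have H4 : 0 < P (sigmainv y) b by apply/(Hs.1 (sigmainv y) b).
exact: (mpow_S_pos HP _ _ _ _ H3 H4).
Qed.

Definition Vmap (n : nat) (A : cmat T) : cmat T := fun i j => A (sigmainv i) (sigmainv j).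

Lemma V_Arv n A : Arv P n A -> Arv Q n (Vmap n A).
Proof.
case=> HZ [M HM]; split.
  move=> i j E; apply: HZ.
  case: (Rle_lt_or_eq_dec _ _ (mpow_ge0 HP n (sigmainv i) (sigmainv j))) => [Hlt|<-] //.
  have := Z1 _ _ _ Hlt; rewrite !Hc' E; lra.
exists M => j; have [E S] := HM (sigmainv j).
have R := @reindex_nonneg T sigmainv sigma (fun i => Cmod (A i (sigmainv j)) ^ 2) Hc' Hc
  (fun i => pow2_ge_0 _) E.
split; first by exists (rsum (fun i => Cmod (A i (sigmainv j)) ^ 2)); exact: R.
have -> : rsum (fun i => Cmod (Vmap n A i j) ^ 2) = rsum (fun i => Cmod (A i (sigmainv j)) ^ 2)
  := is_series_unique _ _ R.
exact: S.
Qed.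

Lemma V_surj n B : Arv Q n B -> exists A, Arv P n A /\ Vmap n A = B.
Proof.
case=> HZ [M HM]; exists (fun a b => B (sigma a) (sigma b)); split; last first.
  by apply: functional_extensionality => i; apply: functional_extensionality => j; rewrite /Vmap !Hc'.
split.
  move=> a b E; apply: HZ.
  case: (Rle_lt_or_eq_dec _ _ (mpow_ge0 HQ n (sigma a) (sigma b))) => [Hlt|<-] //.
  have := Z2 _ _ _ Hlt; lra.
exists M => b; have [E S] := HM (sigma b).
have R := @reindex_nonneg T sigma sigmainv (fun i => Cmod (B i (sigma b)) ^ 2) Hc Hc'
  (fun i => pow2_ge_0 _) E.
split; first by exists (rsum (fun i => Cmod (B i (sigma b)) ^ 2)); exact: R.
have -> : rsum (fun a => Cmod (B (sigma a) (sigma b)) ^ 2) = rsum (fun i => Cmod (B i (sigma b)) ^ 2)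
  := is_series_unique _ _ R.
exact: S.
Qed.

Lemma V_ip n A B : Arv P n A -> Arv P n B ->
  ip (Vmap n A) (Vmap n B) = (ip A B) \o sigmainv.
Proof.
move=> HA HB; apply: functional_extensionality => j; rewrite /ip /Vmap /=.
exact: (@csum_reindex T sigmainv sigma (fun i => Cconj (A i (sigmainv j)) * B i (sigmainv j))%C
   Hc' Hc (ip_ex _ _ _ (sigmainv j) HA HB)).
Qed.

Lemma key_C (c1 c2 s1 s2 t1 t2 : R) (al be : C) :
  (c1 * s1 * s2 = c2 * t1 * t2 \/ (al * be = 0)%C) ->
  (RtoC c1 * ((RtoC s1 * al) * (RtoC s2 * be)) = RtoC c2 * ((RtoC t1 * al) * (RtoC t2 * be)))%C.
Proof.
have E1 : forall c s t : R, (RtoC c * ((RtoC s * al) * (RtoC t * be)))%C = (RtoC (c * s * t) * (al * be))%C.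
  by move=> c s t; rewrite !RtoC_mult; ring.
rewrite !E1; case=> [->|->] //; ring.
Qed.

Lemma V_umul n m A B : Arv P n A -> Arv P m B ->
  Vmap (n + m) (Umul P n m A B) = Umul Q n m (Vmap n A) (Vmap m B).
Proof.
move=> HA HB.
apply: functional_extensionality => i; apply: functional_extensionality => k.
rewrite -(Hc' i) -(Hc' k); move: (sigmainv i) (sigmainv k) => a b.
have Ex := umul_ex HQ _ _ _ _ (sigma a) (sigma b) (V_Arv _ _ HA) (V_Arv _ _ HB).
rewrite /Vmap /Umul !Hc in Ex *.
rewrite -(@csum_reindex T sigma sigmainv _ Hc Hc' Ex) -!csum_scal.
congr csum; apply: functional_extensionality => j /=; rewrite Hc.
apply: key_C.
case: (Rle_lt_or_eq_dec _ _ (mpow_ge0 HP n a j)) => [h1|h1]; last first.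
  by right; rewrite (HA.1 a j (esym h1)); ring.
case: (Rle_lt_or_eq_dec _ _ (mpow_ge0 HP m j b)) => [h2|h2]; last first.
  by right; rewrite (HB.1 j b (esym h2)); ring.
left.
rewrite !flatinv_sqrt; try apply: mpow_ge0; try assumption.
by rewrite (Hs.2 n m a j b (Rmult_lt_0_compat _ _ h1 h2)).
Qed.

End Part2.

Lemma C_ext (z w : C) : Re z = Re w -> Im z = Im w -> z = w.
Proof. by case: z => a b; case: w => c d /= -> ->. Qed.

Ltac cring := apply: C_ext; rewrite /= /Re /Im /=; ring.

Lemma div_ge0 a b c : 0 <= a -> 0 <= b -> 0 <= c -> 0 <= a * b / c.
Proof.
move=> ha hb hc; rewrite /Rdiv; apply: Rmult_le_pos; first exact: Rmult_le_pos.
case: (Rle_lt_or_eq_dec _ _ hc) => [h|<-]; first by left; apply: Rinv_0_lt_compat.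
rewrite Rinv_0; lra.
Qed.

Lemma flatinv_ge0 x : 0 <= flatinv x.
Proof.
rewrite /flatinv; case: (Rlt_dec 0 x) => h /=; last lra.
left; exact: Rinv_0_lt_compat.
Qed.

Section Part1.
Variable T : countType.

Definition Emat (i j : T) : cmat T := fun x y => if (x == i) && (y == j) then RtoC 1 else RtoC 0.
Definition Zmat : cmat T := fun _ _ => RtoC 0.

Lemma pind_linf (j : T) : linf (pind j).
Proof. exists 1 => i; rewrite /pind; case: (i == j); rewrite ?Cmod_1 ?Cmod_0; lra. Qed.

Lemma E_Arv (R0 : rmat T) n i j : 0 < mpow R0 n i j -> Arv R0 n (Emat i j).
Proof.
move=> H; split.
  move=> x y Hz; rewrite /Emat; case: (x =P i) => [Ex|] //; case: (y =P j) => [Ey|] //.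
  by rewrite Ex Ey in Hz; lra.
exists 1 => y.
have Hz : forall x, x <> i -> Cmod (Emat i j x y) ^ 2 = 0.
  move=> x hx; rewrite /Emat; case: (x =P i) => [//|_] /=; rewrite Cmod_0; ring.
have [E S] := single_rsum_eq (fun x => Cmod (Emat i j x y) ^ 2) i Hz.
split => //; rewrite S /Emat eqxx /=; case: (y == j); rewrite ?Cmod_1 ?Cmod_0; lra.
Qed.

Lemma Z_Arv (R0 : rmat T) n (x0 : T) : Arv R0 n Zmat.
Proof.
split => // ; exists 0 => y.
have [E S] := single_rsum_eq (fun x => Cmod (Zmat x y) ^ 2) x0 (fun x _ => ltac:(rewrite /Zmat Cmod_0; ring)).
by split => //; rewrite S /Zmat Cmod_0; lra.
Qed.

Lemma Umul_E (R0 : rmat T) n m i j k (l1 l2 : C) :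
  Umul R0 n m (cscal l1 (Emat i j)) (cscal l2 (Emat j k)) =
  cscal (l1 * l2 * RtoC (flatinv (sqrt (mpow R0 (Nat.add n m) i k)) *
     sqrt (mpow R0 n i j) * sqrt (mpow R0 m j k)))%C (Emat i k).
Proof.
apply: functional_extensionality => x; apply: functional_extensionality => z.
rewrite /Umul (csum_single _ _ j); last first.
  move=> y hy; rewrite /cscal /Emat.
  have -> : (y == j) = false by apply/eqP.
  by rewrite andbF; cring.
rewrite /cscal /Emat eqxx.
case: (x =P i) => [->|nx]; case: (z =P k) => [->|nz]; rewrite ?eqxx /=;
  cring.
Qed.

Variables P Q : rmat T.
Hypothesis HP : stochastic P.
Hypothesis HQ : stochastic Q.
Variable rho : (T -> C) -> (T -> C).
Variable sigma : T -> T.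
Hypothesis Hbij : bijective sigma.
Hypothesis Hpind : forall j, rho (pind j) = pind (sigma j).
Variable V : nat -> cmat T -> cmat T.
Hypothesis HV : rho_unitary_iso P Q rho V.

Lemma V_zero n (x0 : T) : (1 <= n)%coq_nat -> V n Zmat = Zmat.
Proof.
move=> Hn; have [_ [_ [_ [Hs _]]]] := (HV.1 n Hn).
have E1 : cscal (RtoC 0) Zmat = Zmat.
  by apply: functional_extensionality => x; apply: functional_extensionality => y;
     rewrite /cscal /Zmat; cring.
rewrite -{1}E1 Hs; last exact: Z_Arv x0.
by apply: functional_extensionality => x; apply: functional_extensionality => y;
   rewrite /cscal /Zmat; cring.
Qed.

Lemma V_E n i j : (1 <= n)%coq_nat -> 0 < mpow P n i j ->
  exists l, V n (Emat i j) = cscal l (Emat (sigma i) (sigma j)) /\ Cmod l = 1.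
Proof.
move=> Hn Hpos; have [_ [_ [_ [_ [Hbim Hip]]]]] := (HV.1 n Hn).
have HE := E_Arv _ _ _ _ Hpos.
have EW : V n (Emat i j) = ract (lact (pind (sigma i)) (V n (Emat i j))) (pind (sigma j)).
  rewrite -!Hpind -Hbim; [|exact: pind_linf|exact: pind_linf|exact: HE].
  congr (V n); apply: functional_extensionality => x; apply: functional_extensionality => y.
  rewrite /ract /lact /pind /Emat; case: (x == i); case: (y == j); cring.
exists (V n (Emat i j) (sigma i) (sigma j)).
have HW : V n (Emat i j) = cscal (V n (Emat i j) (sigma i) (sigma j)) (Emat (sigma i) (sigma j)).
  apply: functional_extensionality => x; apply: functional_extensionality => y.
  rewrite {1}EW /ract /lact /pind /cscal /Emat.
  case: (x =P sigma i) => [->|nx]; case: (y =P sigma j) => [->|ny]; rewrite ?eqxx /=;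
    cring.
split => //.
set l := V n (Emat i j) (sigma i) (sigma j).
have Hipe : ip (Emat i j) (Emat i j) = pind j.
  apply: functional_extensionality => y; rewrite /ip (csum_single _ _ i).
    rewrite /Emat /pind eqxx /=; case: (y == j); cring.
  move=> x hx; rewrite /Emat.
  have -> : (x == i) = false by apply/eqP.
  cring.
have := Hip _ _ HE HE; rewrite Hipe Hpind HW.
move=> /(f_equal (fun f => f (sigma j))).
rewrite /ip (csum_single _ _ (sigma i)); last first.
  move=> x hx; rewrite /cscal /Emat.
  have -> : (x == sigma i) = false by apply/eqP.
  cring.
rewrite /cscal /Emat /pind !eqxx /=.
move=> E1.
have E2 : (Cconj (l * 1) * (l * 1))%C = (RtoC (Cmod l ^ 2)).
  rewrite Cmod2_conj; cring.
rewrite E2 in E1; move: E1 => /(f_equal Re) /= E1.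
have := Cmod_ge_0 l; nra.
Qed.


Lemma Emat_diag a b : Emat a b a b = RtoC 1.
Proof. by rewrite /Emat !eqxx. Qed.

Lemma cscal1 (A : cmat T) : cscal (RtoC 1) A = A.
Proof.
apply: functional_extensionality => x; apply: functional_extensionality => y.
rewrite /cscal; cring.
Qed.

Lemma Zp n i j : 0 < mpow P n i j <-> 0 < mpow Q n (sigma i) (sigma j).
Proof.
case: n => [|n]; first by rewrite /= (inj_eq (bij_inj Hbij)).
have Hn : (1 <= n.+1)%coq_nat by apply/leP.
split.
  move=> H; have [l [HW Hl]] := V_E _ _ _ Hn H.
  have [HA _] := (HV.1 _ Hn).
  have [HZ _] := HA _ (E_Arv _ _ _ _ H).
  apply: Rnot_le_lt => Hle.
  have E0 : mpow Q n.+1 (sigma i) (sigma j) = 0.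
    have := mpow_ge0 HQ n.+1 (sigma i) (sigma j); lra.
  have E1 : V n.+1 (Emat i j) (sigma i) (sigma j) = l.
    rewrite HW /cscal Emat_diag; cring.
  have := HZ _ _ E0; rewrite E1 => El.
  by move: Hl; rewrite El Cmod_0; lra.
move=> H; have [_ [Hsurj [_ [_ [Hbim _]]]]] := HV.1 _ Hn.
have [A [HA HVA]] := Hsurj _ (E_Arv _ _ _ _ H).
apply: Rnot_le_lt => Hle.
have E0 : mpow P n.+1 i j = 0 by have := mpow_ge0 HP n.+1 i j; lra.
have Aij := HA.1 i j E0.
have Z : ract (lact (pind i) A) (pind j) = Zmat.
  apply: functional_extensionality => x; apply: functional_extensionality => y.
  rewrite /ract /lact /pind /Zmat.
  case: (x =P i) => [->|nx]; case: (y =P j) => [->|ny]; rewrite ?Aij; cring.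
have := Hbim _ _ _ (pind_linf i) (pind_linf j) HA.
rewrite Z (V_zero _ i Hn) HVA !Hpind => /(f_equal (fun W => W (sigma i) (sigma j))).
rewrite /ract /lact /pind /Zmat /Emat !eqxx => /(f_equal Re) /=; lra.
Qed.

Lemma main_b n m i j k : (1 <= n)%coq_nat -> (1 <= m)%coq_nat ->
  0 < mpow P n i j -> 0 < mpow P m j k ->
  mpow P n i j * mpow P m j k / mpow P (Nat.add n m) i k =
  mpow Q n (sigma i) (sigma j) * mpow Q m (sigma j) (sigma k)
    / mpow Q (Nat.add n m) (sigma i) (sigma k).
Proof.
move=> Hn Hm h1 h2.
have [l1 [H1 C1]] := V_E _ _ _ Hn h1.
have [l2 [H2 C2]] := V_E _ _ _ Hm h2.
have HU := HV.2 n m (Emat i j) (Emat j k) Hn Hm (E_Arv _ _ _ _ h1) (E_Arv _ _ _ _ h2).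
set cP := flatinv (sqrt (mpow P (Nat.add n m) i k)) * sqrt (mpow P n i j) * sqrt (mpow P m j k).
set cQ := flatinv (sqrt (mpow Q (Nat.add n m) (sigma i) (sigma k))) *
  sqrt (mpow Q n (sigma i) (sigma j)) * sqrt (mpow Q m (sigma j) (sigma k)).
have EP : Umul P n m (Emat i j) (Emat j k) = cscal (RtoC cP) (Emat i k).
  rewrite -(cscal1 (Emat i j)) -(cscal1 (Emat j k)) Umul_E; congr cscal.
  rewrite /cP; cring.
rewrite EP H1 H2 Umul_E -/cQ in HU.
have cP0 : 0 <= cP.
  rewrite /cP; apply: Rmult_le_pos; [apply: Rmult_le_pos|]; try apply: sqrt_pos; exact: flatinv_ge0.
have cQ0 : 0 <= cQ.
  rewrite /cQ; apply: Rmult_le_pos; [apply: Rmult_le_pos|]; try apply: sqrt_pos; exact: flatinv_ge0.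
have HnM : (1 <= Nat.add n m)%coq_nat by lia.
have Heq : cP = cQ.
  case: (Rle_lt_or_eq_dec _ _ (mpow_ge0 HP (Nat.add n m) i k)) => [hx|hx].
    have [l3 [H3 C3]] := V_E _ _ _ HnM hx.
    have [_ [_ [_ [Hsc _]]]] := HV.1 _ HnM.
    rewrite Hsc in HU; last exact: E_Arv _ _ _ _ hx.
    rewrite H3 in HU.
    have Ev := f_equal (fun W => W (sigma i) (sigma k)) HU.
    rewrite /cscal in Ev; cbv beta in Ev; rewrite !Emat_diag in Ev.
    have := f_equal Cmod Ev; rewrite !Cmod_mult Cmod_1 !Cmod_R C1 C2 C3.
    rewrite !Rabs_pos_eq //; lra.
  have cPz : cP = 0.
    rewrite /cP -hx sqrt_0 /flatinv; case: (Rlt_dec 0 0) => /= h; [lra|ring].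
  have Ez : cscal (RtoC cP) (Emat i k) = Zmat.
    apply: functional_extensionality => x; apply: functional_extensionality => y.
    rewrite /cscal /Zmat cPz; cring.
  rewrite Ez (V_zero _ i HnM) in HU.
  have Ev := f_equal (fun W => W (sigma i) (sigma k)) HU.
  rewrite /cscal /Zmat in Ev; cbv beta in Ev; rewrite !Emat_diag in Ev.
  have := f_equal Cmod Ev; rewrite Cmod_0 !Cmod_mult Cmod_1 !Cmod_R C1 C2.
  rewrite !Rabs_pos_eq //; lra.
move: Heq; rewrite /cP /cQ !flatinv_sqrt; try apply: mpow_ge0; try assumption.
move=> Heq; apply: sqrt_inj => //; apply: div_ge0; apply: mpow_ge0; assumption.
Qed.

End Part1.

Lemma mpow0_diag (T : countType) (R0 : rmat T) x : mpow R0 0 x x = 1.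
Proof. by rewrite /= eqxx. Qed.

Lemma mpow0_pos (T : countType) (R0 : rmat T) x y : 0 < mpow R0 0 x y -> x = y.
Proof. rewrite /=; case: (x =P y) => // _; lra. Qed.

Lemma pos_prod a b : 0 <= a -> 0 <= b -> 0 < a * b -> 0 < a /\ 0 < b.
Proof.
move=> ha hb h; split.
  case: (Rle_lt_or_eq_dec _ _ ha) => // E; rewrite -E in h; lra.
case: (Rle_lt_or_eq_dec _ _ hb) => // E; rewrite -E in h; lra.
Qed.

Theorem mainTheorem8 (T : countType) (P Q : T -> T -> R) :
  stochastic P -> stochastic Q ->
  (forall (rho : (T -> C) -> (T -> C)) (sigma : T -> T),
     star_aut rho -> bijective sigma ->
     (forall j, rho (pind j) = pind (sigma j)) ->
     (exists V, rho_unitary_iso P Q rho V) ->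
     star_cond P Q sigma) /\
  (forall (sigma sigmainv : T -> T),
     cancel sigma sigmainv -> cancel sigmainv sigma ->
     star_cond P Q sigma ->
     exists V, rho_unitary_iso P Q (fun f => f \o sigmainv) V).
Proof.
move=> HP HQ; split.
  move=> rho sigma Hrho Hbij Hpind [V HV].
  have Zp' := @Zp T P Q HP HQ rho sigma Hbij Hpind V HV.
  split.
    move=> i j; rewrite -(@mpow_1 _ P i j) -(@mpow_1 _ Q (sigma i) (sigma j)); exact: Zp'.
  move=> n m i j k H.
  have [h1 h2] := pos_prod _ _ (mpow_ge0 HP n i j) (mpow_ge0 HP m j k) H.
  case: n h1 H => [|n] h1 H.
    have Eij := mpow0_pos _ _ _ _ h1; subst j.
    have h3 := (Zp' m i k).1 h2.
    rewrite Nat.add_0_l !mpow0_diag !Rmult_1_l /Rdiv !Rinv_r //; lra.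
  case: m h2 H => [|m] h2 H.
    have Ejk := mpow0_pos _ _ _ _ h2; subst k.
    have h3 := (Zp' n.+1 i j).1 h1.
    rewrite Nat.add_0_r !mpow0_diag !Rmult_1_r /Rdiv !Rinv_r //; lra.
  apply: (@main_b T P Q HP HQ rho sigma Hpind V HV) => //; by apply/leP.
move=> sigma sigmainv Hc Hc' Hs.
exists (@Vmap T sigmainv); split.
  move=> n Hn; split; [|split;[|split;[|split;[|split]]]].
  - move=> A HA; exact: (@V_Arv T P Q HP HQ sigma sigmainv Hc Hc' Hs n A HA).
  - move=> B HB; exact: (@V_surj T P Q HP HQ sigma sigmainv Hc Hc' Hs n B HB).
  - by move=> A B _ _.
  - by move=> c A _.
  - by move=> a b A _ _ _.
  - move=> A B HA HB; exact: (@V_ip T P sigma sigmainv Hc Hc' n A B HA HB).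
move=> n m A B Hn Hm HA HB; exact: (@V_umul T P Q HP HQ sigma sigmainv Hc Hc' Hs n m A B HA HB).
Qed.
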